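(* Let $k \in \mathbb N$, $T \leq +\infty$, $0 \leq t_1 < t_2 < T$ and $0 < R \leq 1$. Let $h, h_1, h_2 \in C^0([0,1] \times [0,T)) \cap C^{2,1}((0,1) \times (0,T))$ be classical solutions of $$u_t = u_{rr} + \frac{u_r}{r} - k^2 \frac{\sin(2u)}{2r^2}, \quad 0 < r < 1, \ 0 < t < T,$$ and assume that for each $i \in \{1,2\}$, either $h(0,t) \neq h_i(0,t)$ for all $t \in [0,T)$, or $h(0,t) = h_i(0,t) = m_i\pi \in \pi\mathbb Z$ for all $t \in [0,T)$. If $\Gamma$ is a non-empty (path-)connected component of $\{(r,t) \in [0,R] \times [t_1,t_2]: h_1 < h < h_2\}$ and if $$\max_{(r,t) \in \overline{\Gamma}} h_1 < C < \min_{(r,t) \in \overline{\Gamma}} h_2$$ for some $C \in \mathbb R$, then $$\Gamma \cap \left[ \{r = 0\} \cup \{r = R\} \cup \{t = t_1\} \right] \neq \emptyset.$$ Moreover, no matter $\Gamma$, all these hypotheses (including the existence of such $C$) are satisfied when $h$ is any such solution with $h(0,t) = 0$ for all $t \in [0,T)$, $h_1 = \pi/2$ or $h_1 = \chi_{\alpha}(r) = \pi - 2 \arctan(\alpha^k r^k)$ with $\alpha > 0$, and $h_2 = \pi$.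
   Context: $C^{2,1}$ means continuously differentiable in $t$ and twice continuously differentiable in $r$, with derivatives continuous up to the included boundary. Closures are taken in $\mathbb R^2$. *)

(* Defs.v *)
From Stdlib Require Import Reals Lra.
From Coquelicot Require Import Coquelicot.
Open Scope R_scope.

Definition dom_cl (T : Rbar) (r t : R) : Prop :=
  0 <= r <= 1 /\ 0 <= t /\ Rbar_lt (Finite t) T.

Definition dom_op (T : Rbar) (r t : R) : Prop :=
  0 < r < 1 /\ 0 < t /\ Rbar_lt (Finite t) T.

Definition cont2_on (D : R -> R -> Prop) (f : R -> R -> R) : Prop :=
  forall r t, D r t -> forall eps, 0 < eps -> exists delta, 0 < delta /\
    forall r' t', D r' t' -> Rabs (r' - r) < delta -> Rabs (t' - t) < delta ->
      Rabs (f r' t' - f r t) < eps.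

Definition classical_solution (k : nat) (T : Rbar) (h : R -> R -> R) : Prop :=
  cont2_on (dom_cl T) h /\
  exists hr hrr ht : R -> R -> R,
    (forall r t, dom_op T r t ->
       is_derive (fun s => h s t) r (hr r t) /\
       is_derive (fun s => hr s t) r (hrr r t) /\
       is_derive (fun s => h r s) t (ht r t)) /\
    cont2_on (dom_op T) h /\
    cont2_on (dom_op T) hr /\ cont2_on (dom_op T) hrr /\ cont2_on (dom_op T) ht /\
    (forall r t, dom_op T r t ->
       ht r t = hrr r t + hr r t / r - (INR k) ^ 2 * sin (2 * h r t) / (2 * r ^ 2)).

Definition axis_condition (T : Rbar) (h hi : R -> R -> R) : Prop :=
  (forall t, 0 <= t -> Rbar_lt (Finite t) T -> h 0 t <> hi 0 t) \/
  (exists m : Z, forall t, 0 <= t -> Rbar_lt (Finite t) T ->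
      h 0 t = IZR m * PI /\ hi 0 t = IZR m * PI).

Definition cont01 (p : R -> R) : Prop :=
  forall s, 0 <= s <= 1 -> forall eps, 0 < eps -> exists delta, 0 < delta /\
    forall s', 0 <= s' <= 1 -> Rabs (s' - s) < delta -> Rabs (p s' - p s) < eps.

Definition path_in (S : R -> R -> Prop) (a1 a2 b1 b2 : R) : Prop :=
  exists p1 p2 : R -> R, cont01 p1 /\ cont01 p2 /\
    p1 0 = a1 /\ p2 0 = a2 /\ p1 1 = b1 /\ p2 1 = b2 /\
    (forall s, 0 <= s <= 1 -> S (p1 s) (p2 s)).

Definition path_component (S G : R -> R -> Prop) : Prop :=
  (exists r t, G r t) /\
  (forall r t, G r t -> S r t) /\
  (forall a1 a2 b1 b2, G a1 a2 -> G b1 b2 -> path_in S a1 a2 b1 b2) /\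
  (forall a1 a2 b1 b2, G a1 a2 -> S b1 b2 -> path_in S a1 a2 b1 b2 -> G b1 b2).

Definition closure2 (G : R -> R -> Prop) (r t : R) : Prop :=
  forall eps, 0 < eps -> exists r' t', G r' t' /\ Rabs (r' - r) < eps /\ Rabs (t' - t) < eps.

Definition region (Rad t1 t2 : R) (h h1 h2 : R -> R -> R) (r t : R) : Prop :=
  0 <= r <= Rad /\ t1 <= t <= t2 /\ h1 r t < h r t /\ h r t < h2 r t.

Definition chi (k : nat) (alpha : R) (r t : R) : R :=
  PI - 2 * atan (alpha ^ k * r ^ k).

(* Main.v *)
Require Import Defs.
From Stdlib Require Import Reals.
From Coquelicot Require Import Coquelicot.
From Stdlib Require Import Lra Classical FunctionalExtensionality PropExtensionality.
Open Scope R_scope.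
Definition EVT2_stmt : Prop := forall (K : R -> R -> Prop) (f : R -> R -> R) (a b c d : R),
  (exists r t, K r t) ->
  (forall r t, K r t -> a <= r <= b /\ c <= t <= d) ->
  (forall r t, (forall eps, 0 < eps -> exists r' t', K r' t' /\ Rabs (r' - r) < eps /\ Rabs (t' - t) < eps) -> K r t) ->
  (forall r t, K r t -> forall eps, 0 < eps -> exists delta, 0 < delta /\ forall r' t', K r' t' -> Rabs (r'-r) < delta -> Rabs (t'-t) < delta -> Rabs (f r' t' - f r t) < eps) ->
  exists r t, K r t /\ forall r' t', K r' t' -> f r' t' <= f r t.
Close Scope R_scope.
Module EVT2.
From HB Require Import structures.
From mathcomp Require Import all_boot all_order all_algebra all_classical all_reals.
From mathcomp Require Import topology normedtype derive.
From mathcomp Require Import Rstruct Rstruct_topology.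
Import Order.TTheory GRing.Theory Num.Theory.
Local Open Scope classical_set_scope.

Lemma evt2 : EVT2_stmt.
Proof.
move=> K f a b c d [r0 [t0 K0]] Kb Kc fc.
set A : set (R * R)%type := [set z | K z.1 z.2].
set F : (R * R)%type -> R := fun z => f z.1 z.2.
have A0 : A !=set0 by exists (r0, t0).
have cA : compact A.
  apply: (@subclosed_compact _ A (`[a, b] `*` `[c, d])).
  - move=> [r t] /= Hcl; apply: Kc => eps eps0.
    have : nbhs (r, t) [set z : R * R | ball r eps z.1 /\ ball t eps z.2].
      apply/nbhs_ballP; exists eps; first by apply/RltP.
      by move=> [y1 y2] /= [h1 h2]; split.
    move=> /Hcl [[r' t'] [/= Ar' [/= b1 b2]]].
    exists r', t'; split => //.
    move: b1 b2; rewrite /ball /= => /RltP b1 /RltP b2.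
    by rewrite -Rabs_Ropp Ropp_minus_distr -[Rabs (t' - t)]Rabs_Ropp Ropp_minus_distr.
  - by apply: compact_setX; apply: segment_compact.
  - move=> [r t] /= /Kb [[h1 h2] [h3 h4]]; split; rewrite /= in_itv /=; apply/andP; split; apply/RleP => //.
have cF : {within A, continuous F}.
  apply/subspace_continuousP => [[r t]] /= Art.
  apply/cvg_ballP => eps /RltP eps0.
  have [delta [d0 Hd]] := fc r t Art eps eps0.
  rewrite near_withinE; apply/nbhs_ballP; exists delta; first by apply/RltP.
  move=> [y1 y2] /= [b1 b2] Ay.
  move: b1 b2; rewrite /ball /= => /RltP b1 /RltP b2.
  apply/RltP; rewrite /F /from_subspace /=.
  change (Rlt (Rabs (f r t - f y1 y2)) eps).
  change (Rlt (Rabs (r - y1)) delta) in b1.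
  change (Rlt (Rabs (t - y2)) delta) in b2.
  rewrite -Rabs_Ropp Ropp_minus_distr; apply: Hd => //.
    by rewrite -Rabs_Ropp Ropp_minus_distr.
  by rewrite -Rabs_Ropp Ropp_minus_distr.
have [[r t] /set_mem Art Fmax] := compact_EVT_max A0 cA cF.
exists r, t; split => // r' t' K'; apply/RleP; apply: (Fmax (r', t')).
by rewrite inE.
Qed.
End EVT2.

Open Scope R_scope.

Lemma cl_in (G : R -> R -> Prop) r t : G r t -> closure2 G r t.
Proof.
  intros HG eps Heps. exists r, t. repeat split; auto.
  - unfold Rminus; rewrite Rplus_opp_r, Rabs_R0; auto.
  - unfold Rminus; rewrite Rplus_opp_r, Rabs_R0; auto.
Qed.

Lemma cl_mono (A B : R -> R -> Prop) r t :
  (forall r t, A r t -> B r t) -> closure2 A r t -> closure2 B r t.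
Proof.
  intros HAB HA eps Heps. destruct (HA eps Heps) as [r' [t' [H1 [H2 H3]]]].
  exists r', t'; auto.
Qed.

Lemma cl_cl (A : R -> R -> Prop) r t : closure2 (closure2 A) r t -> closure2 A r t.
Proof.
  intros HA eps Heps.
  destruct (HA (eps/2)) as [r' [t' [H1 [H2 H3]]]]; [lra|].
  destruct (H1 (eps/2)) as [r'' [t'' [H4 [H5 H6]]]]; [lra|].
  exists r'', t''. split; auto.
  split.
  - replace (r'' - r) with ((r'' - r') + (r' - r)) by ring.
    eapply Rle_lt_trans; [apply Rabs_triang|]. lra.
  - replace (t'' - t) with ((t'' - t') + (t' - t)) by ring.
    eapply Rle_lt_trans; [apply Rabs_triang|]. lra.
Qed.

Lemma cl_le (D G : R -> R -> Prop) (g1 g2 : R -> R -> R) r t :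
  cont2_on D g1 -> cont2_on D g2 -> (forall r t, G r t -> D r t) -> D r t ->
  (forall r t, G r t -> g1 r t <= g2 r t) -> closure2 G r t -> g1 r t <= g2 r t.
Proof.
  intros c1 c2 GD Drt Hle Hcl.
  destruct (Rle_or_lt (g1 r t) (g2 r t)) as [H|H]; auto. exfalso.
  set (e := (g1 r t - g2 r t) / 2).
  assert (He : 0 < e) by (unfold e; lra).
  destruct (c1 r t Drt e He) as [d1 [Hd1 P1]].
  destruct (c2 r t Drt e He) as [d2 [Hd2 P2]].
  destruct (Hcl (Rmin d1 d2)) as [r' [t' [G' [A1 A2]]]].
  { apply Rmin_pos; auto. }
  assert (B1 := P1 r' t' (GD _ _ G') (Rlt_le_trans _ _ _ A1 (Rmin_l _ _)) (Rlt_le_trans _ _ _ A2 (Rmin_l _ _))).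
  assert (B2 := P2 r' t' (GD _ _ G') (Rlt_le_trans _ _ _ A1 (Rmin_r _ _)) (Rlt_le_trans _ _ _ A2 (Rmin_r _ _))).
  assert (L := Hle r' t' G').
  apply Rabs_def2 in B1. apply Rabs_def2 in B2. unfold e in *. lra.
Qed.

Lemma cont2_const D c : cont2_on D (fun _ _ => c).
Proof.
  intros r t _ eps Heps. exists 1. split; [lra|]. intros. 
  unfold Rminus; rewrite Rplus_opp_r, Rabs_R0; auto.
Qed.

Lemma cont2_r D : cont2_on D (fun r _ => r).
Proof.
  intros r t _ eps Heps. exists eps. split; auto.
Qed.

Lemma cont2_t D : cont2_on D (fun _ t => t).
Proof.
  intros r t _ eps Heps. exists eps. split; auto.
Qed.

Lemma cont2_opp D f : cont2_on D f -> cont2_on D (fun r t => - f r t).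
Proof.
  intros Hf r t Drt eps Heps. destruct (Hf r t Drt eps Heps) as [d [Hd P]].
  exists d; split; auto. intros r' t' D' A1 A2.
  replace (- f r' t' - - f r t) with (- (f r' t' - f r t)) by ring.
  rewrite Rabs_Ropp; auto.
Qed.

Lemma cont2_fun_r D (g : R -> R) :
  (forall r t, D r t -> continuity_pt g r) -> cont2_on D (fun r _ => g r).
Proof.
  intros Hg r t Drt eps Heps.
  destruct (Hg r t Drt eps Heps) as [d [Hd P]].
  exists d; split; auto. intros r' t' _ A1 _.
  destruct (Req_dec r' r) as [E|E].
  - subst. unfold Rminus; rewrite Rplus_opp_r, Rabs_R0; auto.
  - apply (P r'). split; [unfold D_x, no_cond; split; auto|]. exact A1.
Qed.

Lemma cont2_fun_t D (g : R -> R) :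
  (forall r t, D r t -> continuity_pt g t) -> cont2_on D (fun _ t => g t).
Proof.
  intros Hg r t Drt eps Heps.
  destruct (Hg r t Drt eps Heps) as [d [Hd P]].
  exists d; split; auto. intros r' t' _ _ A2.
  destruct (Req_dec t' t) as [E|E].
  - subst. unfold Rminus; rewrite Rplus_opp_r, Rabs_R0; auto.
  - apply (P t'). split; [unfold D_x, no_cond; split; auto|]. exact A2.
Qed.

Lemma cont2_minus D f g : cont2_on D f -> cont2_on D g -> cont2_on D (fun r t => f r t - g r t).
Proof.
  intros Hf Hg r t Drt eps Heps.
  destruct (Hf r t Drt (eps/2)) as [d1 [Hd1 P1]]; [lra|].
  destruct (Hg r t Drt (eps/2)) as [d2 [Hd2 P2]]; [lra|].
  exists (Rmin d1 d2). split; [apply Rmin_pos; auto|].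
  intros r' t' D' A1 A2.
  assert (B1 := P1 r' t' D' (Rlt_le_trans _ _ _ A1 (Rmin_l _ _)) (Rlt_le_trans _ _ _ A2 (Rmin_l _ _))).
  assert (B2 := P2 r' t' D' (Rlt_le_trans _ _ _ A1 (Rmin_r _ _)) (Rlt_le_trans _ _ _ A2 (Rmin_r _ _))).
  apply Rabs_def2 in B1. apply Rabs_def2 in B2. apply Rabs_def1; lra.
Qed.

Lemma cont2_mult D f g : cont2_on D f -> cont2_on D g -> cont2_on D (fun r t => f r t * g r t).
Proof.
  intros Hf Hg r t Drt eps Heps.
  set (a := Rabs (f r t)). set (b := Rabs (g r t)).
  assert (Ha : 0 <= a) by apply Rabs_pos. assert (Hb : 0 <= b) by apply Rabs_pos.
  destruct (Hf r t Drt (Rmin 1 (eps / (2 * (b + 1))))) as [d1 [Hd1 P1]].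
  { apply Rmin_pos; [lra|]. apply Rdiv_lt_0_compat; lra. }
  destruct (Hg r t Drt (eps / (2 * (a + 2)))) as [d2 [Hd2 P2]].
  { apply Rdiv_lt_0_compat; lra. }
  exists (Rmin d1 d2). split; [apply Rmin_pos; auto|].
  intros r' t' D' A1 A2.
  assert (B1 := P1 r' t' D' (Rlt_le_trans _ _ _ A1 (Rmin_l _ _)) (Rlt_le_trans _ _ _ A2 (Rmin_l _ _))).
  assert (B2 := P2 r' t' D' (Rlt_le_trans _ _ _ A1 (Rmin_r _ _)) (Rlt_le_trans _ _ _ A2 (Rmin_r _ _))).
  replace (f r' t' * g r' t' - f r t * g r t) with
     (f r' t' * (g r' t' - g r t) + g r t * (f r' t' - f r t)) by ring.
  eapply Rle_lt_trans; [apply Rabs_triang|]. rewrite !Rabs_mult.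
  assert (F1 : Rabs (f r' t') <= a + 1).
  { replace (f r' t') with (f r t + (f r' t' - f r t)) by ring.
    eapply Rle_trans; [apply Rabs_triang|]. unfold a.
    assert (Rmin 1 (eps / (2 * (b + 1))) <= 1) by apply Rmin_l. lra. }
  assert (F2 : Rabs (f r' t' - f r t) <= eps / (2 * (b + 1))).
  { assert (Rmin 1 (eps / (2 * (b + 1))) <= eps / (2 * (b + 1))) by apply Rmin_r. lra. }
  assert (E1 : Rabs (f r' t') * Rabs (g r' t' - g r t) <= (a + 1) * (eps / (2 * (a + 2)))).
  { apply Rmult_le_compat; try apply Rabs_pos; lra. }
  assert (E2 : b * Rabs (f r' t' - f r t) <= b * (eps / (2 * (b + 1)))).
  { apply Rmult_le_compat_l; auto. }
  assert (E3 : (a + 1) * (eps / (2 * (a + 2))) < eps / 2).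
  { apply Rmult_lt_reg_r with (2 * (a + 2)); [lra|].
    field_simplify; [nra|lra]. }
  assert (E4 : b * (eps / (2 * (b + 1))) < eps / 2).
  { apply Rmult_lt_reg_r with (2 * (b + 1)); [lra|].
    field_simplify; [nra|lra]. }
  fold b. lra.
Qed.

Definition rect (Rad t1 t2 r t : R) : Prop := 0 <= r <= Rad /\ t1 <= t <= t2.

Lemma rect_dom T Rad t1 t2 r t : 0 <= t1 -> Rbar_lt (Finite t2) T -> Rad <= 1 ->
  rect Rad t1 t2 r t -> dom_cl T r t.
Proof.
  intros H1 H2 H3 [[A B] [C D]]. unfold dom_cl. split; [lra|]. split; [lra|].
  apply Rbar_le_lt_trans with (Finite t2); [simpl; lra| auto].
Qed.

Lemma region_rect Rad t1 t2 h h1 h2 r t : region Rad t1 t2 h h1 h2 r t -> rect Rad t1 t2 r t.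
Proof. intros [A [B _]]; split; auto. Qed.

Lemma seg_cont01 a b : cont01 (fun s => a + s * (b - a)).
Proof.
  intros s Hs eps Heps. exists (eps / (Rabs (b - a) + 1)). split.
  { apply Rdiv_lt_0_compat; [lra|]. assert (0 <= Rabs (b - a)) by apply Rabs_pos. lra. }
  intros s' Hs' Hd.
  replace (a + s' * (b - a) - (a + s * (b - a))) with ((s' - s) * (b - a)) by ring.
  rewrite Rabs_mult. assert (P : 0 <= Rabs (b - a)) by apply Rabs_pos.
  apply Rle_lt_trans with ((eps / (Rabs (b - a) + 1)) * Rabs (b - a)).
  { apply Rmult_le_compat_r; auto; lra. }
  apply Rmult_lt_reg_r with (Rabs (b - a) + 1); [lra|].
  field_simplify; [nra|lra].
Qed.

Lemma seg_path (S : R -> R -> Prop) a1 a2 b1 b2 :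
  (forall s, 0 <= s <= 1 -> S (a1 + s * (b1 - a1)) (a2 + s * (b2 - a2))) ->
  path_in S a1 a2 b1 b2.
Proof.
  intros HS. exists (fun s => a1 + s * (b1 - a1)), (fun s => a2 + s * (b2 - a2)).
  split; [apply seg_cont01|]. split; [apply seg_cont01|].
  split; [ring|]. split; [ring|]. split; [ring|]. split; [ring|]. exact HS.
Qed.

Lemma seg_conv lo hi a b s : lo <= a <= hi -> lo <= b <= hi -> 0 <= s <= 1 ->
  lo <= a + s * (b - a) <= hi.
Proof. intros. split; nra. Qed.

Lemma seg_dist a b z d s : Rabs (a - z) < d -> Rabs (b - z) < d -> 0 <= s <= 1 ->
  Rabs (a + s * (b - a) - z) < d.
Proof.
  intros Ha Hb Hs. apply Rabs_def2 in Ha. apply Rabs_def2 in Hb.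
  assert (P1 : 0 <= (1 - s) * (d - (a - z))) by (apply Rmult_le_pos; lra).
  assert (P2 : 0 <= (1 - s) * (d + (a - z))) by (apply Rmult_le_pos; lra).
  destruct (Req_dec s 0) as [E|E].
  - subst. apply Rabs_def1; lra.
  - assert (Q1 : 0 < s * (d - (b - z))) by (apply Rmult_lt_0_compat; lra).
    assert (Q2 : 0 < s * (d + (b - z))) by (apply Rmult_lt_0_compat; lra).
    apply Rabs_def1; nra.
Qed.

Lemma local_region T Rad t1 t2 h h1 h2 r0 t0 :
  cont2_on (dom_cl T) h -> cont2_on (dom_cl T) h1 -> cont2_on (dom_cl T) h2 ->
  (forall r t, rect Rad t1 t2 r t -> dom_cl T r t) ->
  rect Rad t1 t2 r0 t0 -> h1 r0 t0 < h r0 t0 -> h r0 t0 < h2 r0 t0 ->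
  exists d, 0 < d /\ forall r t, rect Rad t1 t2 r t -> Rabs (r - r0) < d -> Rabs (t - t0) < d ->
     region Rad t1 t2 h h1 h2 r t.
Proof.
  intros c c1 c2 Hrd Hz L1 L2.
  set (e := Rmin (h r0 t0 - h1 r0 t0) (h2 r0 t0 - h r0 t0) / 2).
  assert (He : 0 < e) by (unfold e; apply Rmin_case; lra).
  assert (He1 : e <= (h r0 t0 - h1 r0 t0) / 2) by (unfold e; assert (T0 := Rmin_l (h r0 t0 - h1 r0 t0) (h2 r0 t0 - h r0 t0)); lra).
  assert (He2 : e <= (h2 r0 t0 - h r0 t0) / 2) by (unfold e; assert (T0 := Rmin_r (h r0 t0 - h1 r0 t0) (h2 r0 t0 - h r0 t0)); lra).
  destruct (c r0 t0 (Hrd _ _ Hz) e He) as [d [Hd P]].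
  destruct (c1 r0 t0 (Hrd _ _ Hz) e He) as [d1 [Hd1 P1]].
  destruct (c2 r0 t0 (Hrd _ _ Hz) e He) as [d2 [Hd2 P2]].
  exists (Rmin d (Rmin d1 d2)). split; [repeat apply Rmin_pos; auto|].
  intros r t Hrt A1 A2.
  assert (M1 := Rmin_l d (Rmin d1 d2)). assert (M2 := Rmin_r d (Rmin d1 d2)).
  assert (M3 := Rmin_l d1 d2). assert (M4 := Rmin_r d1 d2).
  assert (B := P r t (Hrd _ _ Hrt) ltac:(lra) ltac:(lra)).
  assert (B1 := P1 r t (Hrd _ _ Hrt) ltac:(lra) ltac:(lra)).
  assert (B2 := P2 r t (Hrd _ _ Hrt) ltac:(lra) ltac:(lra)).
  apply Rabs_def2 in B. apply Rabs_def2 in B1. apply Rabs_def2 in B2.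
  destruct Hrt as [R1 R2]. split; auto. split; auto. split; lra.
Qed.

Lemma local_path T Rad t1 t2 h h1 h2 r0 t0 :
  cont2_on (dom_cl T) h -> cont2_on (dom_cl T) h1 -> cont2_on (dom_cl T) h2 ->
  (forall r t, rect Rad t1 t2 r t -> dom_cl T r t) ->
  rect Rad t1 t2 r0 t0 -> h1 r0 t0 < h r0 t0 -> h r0 t0 < h2 r0 t0 ->
  exists d, 0 < d /\ forall a1 a2 b1 b2, rect Rad t1 t2 a1 a2 -> rect Rad t1 t2 b1 b2 ->
     Rabs (a1 - r0) < d -> Rabs (a2 - t0) < d -> Rabs (b1 - r0) < d -> Rabs (b2 - t0) < d ->
     path_in (region Rad t1 t2 h h1 h2) a1 a2 b1 b2.
Proof.
  intros c c1 c2 Hrd Hz L1 L2.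
  destruct (local_region T Rad t1 t2 h h1 h2 r0 t0 c c1 c2 Hrd Hz L1 L2) as [d [Hd P]].
  exists d. split; auto. intros a1 a2 b1 b2 Ha Hb D1 D2 D3 D4.
  apply seg_path. intros s Hs. apply P.
  - destruct Ha, Hb. split; apply seg_conv; auto.
  - apply seg_dist; auto.
  - apply seg_dist; auto.
Qed.

Lemma cl_region_G T Rad t1 t2 h h1 h2 G r0 t0 :
  cont2_on (dom_cl T) h -> cont2_on (dom_cl T) h1 -> cont2_on (dom_cl T) h2 ->
  (forall r t, rect Rad t1 t2 r t -> dom_cl T r t) ->
  path_component (region Rad t1 t2 h h1 h2) G ->
  closure2 G r0 t0 -> region Rad t1 t2 h h1 h2 r0 t0 -> G r0 t0.
Proof.
  intros c c1 c2 Hrd [_ [GS [_ Gc]]] Hcl Hreg.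
  assert (Hz := region_rect _ _ _ _ _ _ _ _ Hreg). assert (Hreg' := Hreg).
  destruct Hreg as [_ [_ [L1 L2]]].
  destruct (local_path T Rad t1 t2 h h1 h2 r0 t0 c c1 c2 Hrd Hz L1 L2) as [d [Hd P]].
  destruct (Hcl d Hd) as [r' [t' [G' [A1 A2]]]].
  apply Gc with r' t'; auto.
  apply P; auto.
  - apply (region_rect _ _ _ _ _ _ _ _ (GS _ _ G')).
  - unfold Rminus; rewrite Rplus_opp_r, Rabs_R0; auto.
  - unfold Rminus; rewrite Rplus_opp_r, Rabs_R0; auto.
Qed.

Lemma cl_rect Rad t1 t2 (G : R -> R -> Prop) r t :
  (forall r t, G r t -> rect Rad t1 t2 r t) -> closure2 G r t -> rect Rad t1 t2 r t.
Proof.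
  intros HG Hcl. set (D := fun (_ _ : R) => True).
  assert (GD : forall r t, G r t -> D r t) by (intros; exact I).
  split; split.
  - apply (cl_le D G (fun _ _ => 0) (fun r _ => r) r t (cont2_const _ _) (cont2_r _) GD I); auto.
    intros r' t' H; apply HG in H; destruct H as [[? ?] _]; auto.
  - apply (cl_le D G (fun r _ => r) (fun _ _ => Rad) r t (cont2_r _) (cont2_const _ _) GD I); auto.
    intros r' t' H; apply HG in H; destruct H as [[? ?] _]; auto.
  - apply (cl_le D G (fun _ _ => t1) (fun _ t => t) r t (cont2_const _ _) (cont2_t _) GD I); auto.
    intros r' t' H; apply HG in H; destruct H as [_ [? ?]]; auto.
  - apply (cl_le D G (fun _ t => t) (fun _ _ => t2) r t (cont2_t _) (cont2_const _ _) GD I); auto.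
    intros r' t' H; apply HG in H; destruct H as [_ [? ?]]; auto.
Qed.

Lemma deriv_left_max (g : R -> R) x l d :
  is_derive g x l -> 0 < d -> (forall y, x - d < y <= x -> g y <= g x) -> 0 <= l.
Proof.
  intros Hd Hdp Hm. apply is_derive_Reals in Hd.
  destruct (Rle_or_lt 0 l) as [H|H]; auto. exfalso.
  destruct (Hd (- l) ltac:(lra)) as [[e He] P]. simpl in P.
  set (hh := - Rmin (d/2) (e/2)).
  assert (M1 := Rmin_l (d/2) (e/2)). assert (M2 := Rmin_r (d/2) (e/2)).
  assert (Mp : 0 < Rmin (d/2) (e/2)) by (apply Rmin_pos; lra).
  assert (Hh : hh <> 0) by (unfold hh; lra).
  assert (Ha : Rabs hh < e) by (unfold hh; rewrite Rabs_Ropp, Rabs_pos_eq; lra).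
  specialize (P hh Hh Ha).
  assert (Q : g (x + hh) <= g x) by (apply Hm; unfold hh; lra).
  assert (Q2 : 0 <= (g (x + hh) - g x) / hh).
  { unfold Rdiv. replace ((g (x + hh) - g x) * / hh) with ((g x - g (x + hh)) * / (- hh)).
    - apply Rmult_le_pos; [lra|]. left; apply Rinv_0_lt_compat; unfold hh; lra.
    - field; auto. }
  apply Rabs_def2 in P. lra.
Qed.

Lemma deriv_right_max (g : R -> R) x l d :
  is_derive g x l -> 0 < d -> (forall y, x <= y < x + d -> g y <= g x) -> l <= 0.
Proof.
  intros Hd Hdp Hm. apply is_derive_Reals in Hd.
  destruct (Rle_or_lt l 0) as [H|H]; auto. exfalso.
  destruct (Hd l H) as [[e He] P]. simpl in P.
  assert (M1 := Rmin_l (d/2) (e/2)). assert (M2 := Rmin_r (d/2) (e/2)).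
  assert (Mp : 0 < Rmin (d/2) (e/2)) by (apply Rmin_pos; lra).
  set (hh := Rmin (d/2) (e/2)) in *.
  assert (Hh : hh <> 0) by lra.
  assert (Ha : Rabs hh < e) by (rewrite Rabs_pos_eq; lra).
  specialize (P hh Hh Ha).
  assert (Q : g (x + hh) <= g x) by (apply Hm; lra).
  assert (Q2 : (g (x + hh) - g x) / hh <= 0).
  { unfold Rdiv. replace ((g (x + hh) - g x) * / hh) with (- ((g x - g (x + hh)) * / hh)) by ring.
    assert (0 <= (g x - g (x + hh)) * / hh); [|lra].
    apply Rmult_le_pos; [lra|]. left; apply Rinv_0_lt_compat; lra. }
  apply Rabs_def2 in P. lra.
Qed.

Lemma deriv_pos_right (g : R -> R) x l :
  is_derive g x l -> 0 < l -> g x = 0 -> exists e, 0 < e /\ forall y, x < y < x + e -> 0 < g y.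
Proof.
  intros Hd Hl H0. apply is_derive_Reals in Hd.
  destruct (Hd l Hl) as [[e He] P]. simpl in P. exists e. split; auto.
  intros y Hy. specialize (P (y - x) ltac:(lra) ltac:(rewrite Rabs_pos_eq; lra)).
  replace (x + (y - x)) with y in P by ring. rewrite H0 in P.
  apply Rabs_def2 in P.
  assert (Q : 0 < (g y - 0) / (y - x)) by lra.
  unfold Rdiv in Q. rewrite Rminus_0_r in Q.
  assert (0 < y - x) by lra.
  destruct (Rle_or_lt (g y) 0) as [N|N]; auto.
  assert (g y * / (y - x) <= 0); [|lra].
  replace (g y * / (y - x)) with (- ((- g y) * / (y - x))) by ring.
  assert (0 <= - g y * / (y - x)); [|lra].
  apply Rmult_le_pos; [lra|]. left; apply Rinv_0_lt_compat; lra.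
Qed.

Lemma deriv_cont_pt (g : R -> R) x l : is_derive g x l -> continuity_pt g x.
Proof.
  intros H. apply continuity_pt_filterlim. apply (ex_derive_continuous g x).
  exists l; exact H.
Qed.

Lemma local_max_2 (g g1 : R -> R) x g2 d :
  0 < d ->
  (forall y, Rabs (y - x) < d -> is_derive g y (g1 y)) ->
  is_derive g1 x g2 ->
  (forall y, Rabs (y - x) < d -> g y <= g x) -> g1 x = 0 /\ g2 <= 0.
Proof.
  intros Hd Hg Hg1 Hm.
  assert (Hx : Rabs (x - x) < d) by (unfold Rminus; rewrite Rplus_opp_r, Rabs_R0; auto).
  assert (Z : g1 x = 0).
  { apply Rle_antisym.
    - apply (deriv_right_max g x (g1 x) d (Hg x Hx) Hd).
      intros y Hy; apply Hm; rewrite Rabs_pos_eq; lra.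
    - apply (deriv_left_max g x (g1 x) d (Hg x Hx) Hd).
      intros y Hy; apply Hm. rewrite Rabs_left1; lra. }
  split; auto.
  destruct (Rle_or_lt g2 0) as [H|H]; auto. exfalso.
  destruct (deriv_pos_right g1 x g2 Hg1 H Z) as [e [He Pe]].
  set (b := x + Rmin (d/2) (e/2)). set (a := x + Rmin (d/2) (e/2) / 2).
  assert (M1 := Rmin_l (d/2) (e/2)). assert (M2 := Rmin_r (d/2) (e/2)).
  assert (Mp : 0 < Rmin (d/2) (e/2)) by (apply Rmin_pos; lra).
  assert (Hin : forall y, x <= y <= b -> Rabs (y - x) < d).
  { intros y Hy. rewrite Rabs_pos_eq; unfold b in Hy; lra. }
  destruct (MVT_gen g x a g1) as [c1 [Hc1 E1]].
  { intros y Hy. apply Hg. rewrite Rmin_left, Rmax_right in Hy by (unfold a; lra).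
    apply Hin; unfold a, b in *; lra. }
  { intros y Hy. rewrite Rmin_left, Rmax_right in Hy by (unfold a; lra).
    apply (deriv_cont_pt g y (g1 y)). apply Hg. apply Hin; unfold a, b in *; lra. }
  destruct (MVT_gen g a b g1) as [c2 [Hc2 E2]].
  { intros y Hy. apply Hg. rewrite Rmin_left, Rmax_right in Hy by (unfold a, b; lra).
    apply Hin; unfold a, b in *; lra. }
  { intros y Hy. rewrite Rmin_left, Rmax_right in Hy by (unfold a, b; lra).
    apply (deriv_cont_pt g y (g1 y)). apply Hg. apply Hin; unfold a, b in *; lra. }
  rewrite Rmin_left, Rmax_right in Hc1 by (unfold a; lra).
  rewrite Rmin_left, Rmax_right in Hc2 by (unfold a, b; lra).
  assert (G1 : 0 <= g1 c1).
  { destruct (Req_dec c1 x) as [Ex|Ex]; [subst; lra|]. left; apply Pe; unfold a in *; lra. }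
  assert (G2 : 0 < g1 c2) by (apply Pe; unfold a, b in *; lra).
  assert (F1 : 0 <= g1 c1 * (a - x)) by (apply Rmult_le_pos; unfold a; lra).
  assert (F2 : 0 < g1 c2 * (b - a)) by (apply Rmult_lt_0_compat; unfold a, b; lra).
  assert (Hb : g b <= g x) by (apply Hm, Hin; unfold b; lra).
  lra.
Qed.

Lemma sin_lip a b : sin a - sin b <= Rabs (a - b).
Proof.
  destruct (MVT_gen sin b a cos) as [c [_ E]].
  - intros y _. apply is_derive_Reals. apply derivable_pt_lim_sin.
  - intros y _. apply continuity_sin.
  rewrite E. rewrite <- (Rmult_1_l (Rabs (a - b))).
  eapply Rle_trans; [apply RRle_abs|]. rewrite Rabs_mult.
  apply Rmult_le_compat_r; [apply Rabs_pos|].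
  destruct (COS_bound c). apply Rabs_le; lra.
Qed.

Lemma sin_shift m x : sin (2 * x) = sin (2 * (x - IZR m * PI)).
Proof.
  replace (2 * x) with (2 * (x - IZR m * PI) + 2 * (IZR m * PI)) at 1 by ring.
  rewrite sin_plus.
  assert (S0 : sin (IZR m * PI) = 0) by (apply sin_eq_0_1; exists m; auto).
  rewrite (sin_2a (IZR m * PI)), (cos_2a_sin (IZR m * PI)), S0. ring.
Qed.

Lemma sin_mono_near m x y :
  Rabs (x - IZR m * PI) < PI / 4 -> Rabs (y - IZR m * PI) < PI / 4 -> y <= x ->
  sin (2 * y) <= sin (2 * x).
Proof.
  intros Hx Hy Hyx. rewrite (sin_shift m x), (sin_shift m y).
  apply Rabs_def2 in Hx. apply Rabs_def2 in Hy.
  apply sin_incr_1; lra.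
Qed.

Lemma cont2_sub (D1 D2 : R -> R -> Prop) f :
  (forall r t, D1 r t -> D2 r t) -> cont2_on D2 f -> cont2_on D1 f.
Proof.
  intros H12 Hf r t D1rt eps Heps. destruct (Hf r t (H12 _ _ D1rt) eps Heps) as [d [Hd P]].
  exists d; split; auto.
Qed.

Lemma Rabs_0_pt x : Rabs (x - x) = 0.
Proof. unfold Rminus; rewrite Rplus_opp_r; apply Rabs_R0. Qed.

Lemma exp_cont_pt lam t : continuity_pt (fun t => exp (- (lam * t))) t.
Proof.
  apply (deriv_cont_pt _ _ (- lam * exp (- (lam * t)))). auto_derive; auto. ring.
Qed.

Lemma evt2' (K : R -> R -> Prop) (f : R -> R -> R) (a b c d : R) :
  (exists r t, K r t) ->
  (forall r t, K r t -> a <= r <= b /\ c <= t <= d) ->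
  (forall r t, closure2 K r t -> K r t) ->
  cont2_on K f ->
  exists r t, K r t /\ forall r' t', K r' t' -> f r' t' <= f r t.
Proof. intros. apply (EVT2.evt2 K f a b c d); auto. Qed.

Lemma evt2_rect (K : R -> R -> Prop) (f : R -> R -> R) Rad t1 t2 :
  (exists r t, K r t) ->
  (forall r t, K r t -> rect Rad t1 t2 r t) ->
  (forall r t, closure2 K r t -> K r t) ->
  cont2_on K f ->
  exists r t, K r t /\ forall r' t', K r' t' -> f r' t' <= f r t.
Proof. intros. apply (evt2' K f 0 Rad t1 t2); auto. Qed.

Lemma min_r_rect (K : R -> R -> Prop) Rad t1 t2 :
  (exists r t, K r t) ->
  (forall r t, K r t -> rect Rad t1 t2 r t) ->
  (forall r t, closure2 K r t -> K r t) ->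
  exists r0 t0, K r0 t0 /\ forall r t, K r t -> r0 <= r.
Proof.
  intros Hne Hb Hcl.
  destruct (evt2_rect K (fun r _ => - r) Rad t1 t2 Hne Hb Hcl (cont2_opp _ _ (cont2_r K)))
    as [r0 [t0 [K0 P]]].
  exists r0, t0. split; auto. intros r t Krt. specialize (P r t Krt). lra.
Qed.

Lemma min_t_rect (K : R -> R -> Prop) Rad t1 t2 :
  (exists r t, K r t) ->
  (forall r t, K r t -> rect Rad t1 t2 r t) ->
  (forall r t, closure2 K r t -> K r t) ->
  exists r0 t0, K r0 t0 /\ forall r t, K r t -> t0 <= t.
Proof.
  intros Hne Hb Hcl.
  destruct (evt2_rect K (fun _ t => - t) Rad t1 t2 Hne Hb Hcl (cont2_opp _ _ (cont2_t K)))
    as [r0 [t0 [K0 P]]].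
  exists r0, t0. split; auto. intros r t Krt. specialize (P r t Krt). lra.
Qed.

Lemma delta_choice T Rad t1 t2 (h h1 : R -> R -> R) (K : R -> R -> Prop) :
  cont2_on (dom_cl T) h -> cont2_on (dom_cl T) h1 -> axis_condition T h h1 ->
  (exists r t, K r t) -> (forall r t, K r t -> rect Rad t1 t2 r t) ->
  (forall r t, closure2 K r t -> K r t) ->
  (forall r t, rect Rad t1 t2 r t -> dom_cl T r t) ->
  (forall r t, K r t -> h1 r t <= h r t) ->
  (forall t, K 0 t -> h1 0 t < h 0 t -> False) ->
  exists d, 0 < d /\ forall r t, K r t -> r < d -> sin (2 * h1 r t) <= sin (2 * h r t).
Proof.
  intros Hc Hc1 Hax Hne Hb Hcl Hrd Hle H0.
  destruct Hax as [A1 | [m A2]].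
  - destruct (min_r_rect K Rad t1 t2 Hne Hb Hcl) as [r0 [t0 [K0 P]]].
    destruct (Rle_or_lt r0 0) as [N|N].
    + exfalso. assert (E : r0 = 0) by (destruct (Hb _ _ K0) as [[? ?] _]; lra). subst r0.
      destruct (Hrd _ _ (Hb _ _ K0)) as [_ [Ht0 HtT]].
      destruct (Hle _ _ K0) as [L|L]; [apply (H0 t0 K0 L)|].
      apply (A1 t0 Ht0 HtT); auto.
    + exists r0. split; auto. intros r t Krt Hr. specialize (P r t Krt). lra.
  - set (K' := fun r t => K r t /\ ~ (Rabs (h r t - IZR m * PI) < PI / 4 /\ Rabs (h1 r t - IZR m * PI) < PI / 4)).
    assert (Hnear : forall r t, K r t -> ~ K' r t -> sin (2 * h1 r t) <= sin (2 * h r t)).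
    { intros r t Krt NK.
      destruct (classic (Rabs (h r t - IZR m * PI) < PI / 4 /\ Rabs (h1 r t - IZR m * PI) < PI / 4)) as [[N1 N2]|N].
      - apply (sin_mono_near m); auto.
      - exfalso; apply NK; split; auto. }
    destruct (classic (exists r t, K' r t)) as [Hne'|Hne'].
    + assert (Hcl' : forall r t, closure2 K' r t -> K' r t).
      { intros r t Hr. assert (Krt : K r t).
        { apply Hcl. apply (cl_mono K' K); auto. intros ? ? [? ?]; auto. }
        split; auto. intros [N1 N2].
        set (e := Rmin (PI / 4 - Rabs (h r t - IZR m * PI)) (PI / 4 - Rabs (h1 r t - IZR m * PI))).
        assert (M1 := Rmin_l (PI / 4 - Rabs (h r t - IZR m * PI)) (PI / 4 - Rabs (h1 r t - IZR m * PI))).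
        assert (M2 := Rmin_r (PI / 4 - Rabs (h r t - IZR m * PI)) (PI / 4 - Rabs (h1 r t - IZR m * PI))).
        assert (He : 0 < e) by (unfold e; apply Rmin_case; lra).
        fold e in M1, M2.
        assert (Dz := Hrd _ _ (Hb _ _ Krt)).
        destruct (Hc r t Dz e He) as [d1 [Hd1 P1]].
        destruct (Hc1 r t Dz e He) as [d2 [Hd2 P2]].
        destruct (Hr (Rmin d1 d2)) as [r' [t' [[K1 NK1] [B1 B2]]]]; [apply Rmin_pos; auto|].
        assert (Q1 := Rmin_l d1 d2). assert (Q2 := Rmin_r d1 d2).
        assert (Dz' := Hrd _ _ (Hb _ _ K1)).
        assert (E1 := P1 r' t' Dz' ltac:(lra) ltac:(lra)).
        assert (E2 := P2 r' t' Dz' ltac:(lra) ltac:(lra)).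
        apply NK1. split.
        - replace (h r' t' - IZR m * PI) with ((h r' t' - h r t) + (h r t - IZR m * PI)) by ring.
          eapply Rle_lt_trans; [apply Rabs_triang|]. lra.
        - replace (h1 r' t' - IZR m * PI) with ((h1 r' t' - h1 r t) + (h1 r t - IZR m * PI)) by ring.
          eapply Rle_lt_trans; [apply Rabs_triang|]. lra. }
      destruct (min_r_rect K' Rad t1 t2 Hne' ltac:(intros r t [Kr _]; auto) Hcl') as [r0 [t0 [K0 P]]].
      destruct (Rle_or_lt r0 0) as [N|N].
      * exfalso. destruct K0 as [K0 NK0].
        assert (E : r0 = 0) by (destruct (Hb _ _ K0) as [[? ?] _]; lra). subst r0.
        destruct (Hrd _ _ (Hb _ _ K0)) as [_ [Ht0 HtT]].
        destruct (A2 t0 Ht0 HtT) as [E1 E2].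
        apply NK0. rewrite E1, E2. rewrite Rabs_0_pt. split; apply PI_4_gt_0 || (assert (PI > 0) by apply PI_RGT_0; lra).
      * exists r0. split; auto. intros r t Krt Hr. apply Hnear; auto.
        intros K'r. specialize (P r t K'r). lra.
    + exists 1. split; [lra|]. intros r t Krt _. apply Hnear; auto.
      intros K'r; apply Hne'; exists r, t; auto.
Qed.

Lemma path_end (S : R -> R -> Prop) a1 a2 b1 b2 : path_in S a1 a2 b1 b2 -> S b1 b2.
Proof.
  intros [p1 [p2 [_ [_ [_ [_ [E1 [E2 P]]]]]]]]. rewrite <- E1, <- E2. apply P; lra.
Qed.

Lemma core_low (k : nat) (T : Rbar) (t1 t2 Rad : R)
  (Ht : 0 <= t1 < t2) (HtT : Rbar_lt (Finite t2) T) (HR : 0 < Rad <= 1)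
  (h h1 h2 : R -> R -> R) (Hh : classical_solution k T h) (Hh1 : classical_solution k T h1)
  (Hc2 : cont2_on (dom_cl T) h2) (Hax : axis_condition T h h1)
  (G : R -> R -> Prop) (HG : path_component (region Rad t1 t2 h h1 h2) G)
  (C : R) (HC1 : forall r t, closure2 G r t -> h1 r t < C)
  (HC2 : forall r t, closure2 G r t -> C < h2 r t)
  (Hno : forall r t, G r t -> r <> 0 /\ r <> Rad /\ t <> t1)
  (s : R) (Hs : forall r t, closure2 G r t -> t <= s -> h r t <> C)
  (rq tq : R) (Gq : G rq tq) (Htq : tq <= s) (Hhq : h rq tq < C) : False.
Proof.
  destruct Hh as [Hc [hr [hrr [ht [Hd [_ [_ [_ [_ Hpde]]]]]]]]].
  destruct Hh1 as [Hc1 [h1r [h1rr [h1t [Hd1 [_ [_ [_ [_ Hpde1]]]]]]]]].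
  assert (Hrd : forall r t, rect Rad t1 t2 r t -> dom_cl T r t).
  { intros r t H. apply (rect_dom T Rad t1 t2); auto; lra. }
  assert (HG' := HG). destruct HG' as [Gne [GS [Gp Gc]]].
  assert (GR : forall r t, G r t -> rect Rad t1 t2 r t) by (intros; apply (region_rect Rad t1 t2 h h1 h2); auto).
  set (D := fun r t => G r t /\ t <= s /\ h r t < C).
  set (K := closure2 D).
  assert (DK : forall r t, D r t -> K r t) by (intros; apply cl_in; auto).
  assert (KG : forall r t, K r t -> closure2 G r t).
  { intros r t H. apply (cl_mono D G); auto. intros ? ? [? ?]; auto. }
  assert (Krect : forall r t, K r t -> rect Rad t1 t2 r t).
  { intros r t H. apply (cl_rect Rad t1 t2 D); auto. intros ? ? [? ?]; auto. }
  assert (Kdom : forall r t, K r t -> dom_cl T r t) by auto.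
  assert (Kcl : forall r t, closure2 K r t -> K r t) by (intros; apply cl_cl; auto).
  assert (Ks : forall r t, K r t -> t <= s).
  { intros r t H. apply (cl_le (fun _ _ => True) D (fun _ t => t) (fun _ _ => s) r t (cont2_t _) (cont2_const _ _)
      (fun _ _ _ => I) I ltac:(intros ? ? [? [? ?]]; auto) H). }
  assert (KhC : forall r t, K r t -> h r t < C).
  { intros r t H.
    assert (L : h r t <= C).
    { apply (cl_le (dom_cl T) D h (fun _ _ => C) r t Hc (cont2_const _ _)
        ltac:(intros ? ? [G1 _]; auto) (Kdom _ _ H) ltac:(intros ? ? [? [? ?]]; lra) H). }
    destruct L as [L|L]; auto. exfalso; apply (Hs r t (KG _ _ H) (Ks _ _ H)); exact L. }
  assert (Kv : forall r t, K r t -> h1 r t <= h r t).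
  { intros r t H. apply (cl_le (dom_cl T) D h1 h r t Hc1 Hc
        ltac:(intros ? ? [G1 _]; auto) (Kdom _ _ H)); auto.
    intros r' t' [G1 _]. destruct (GS _ _ G1) as [_ [_ [? ?]]]; lra. }
  assert (KD : forall r t, K r t -> h1 r t < h r t -> D r t).
  { intros r t H L. split; [|split; [apply (Ks _ _ H)|apply (KhC _ _ H)]].
    apply (cl_region_G T Rad t1 t2 h h1 h2 G r t Hc Hc1 Hc2 Hrd HG (KG _ _ H)).
    destruct (Krect _ _ H) as [Ra Rb].
    split; [exact Ra|]. split; [exact Rb|]. split; [exact L|].
    apply Rlt_trans with C; [apply (KhC _ _ H)|apply (HC2 _ _ (KG _ _ H))]. }
  assert (Kne : exists r t, K r t).
  { exists rq, tq. apply DK. split; auto. }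
  destruct (delta_choice T Rad t1 t2 h h1 K Hc Hc1 Hax Kne Krect Kcl Hrd Kv) as [del [Hdel Pdel]].
  { intros t K0 L. destruct (KD 0 t K0 L) as [G0 _]. destruct (Hno 0 t G0); auto. }
  set (lam := INR k ^ 2 / del ^ 2 + 1).
  assert (Hk2 : 0 <= INR k ^ 2) by (apply pow2_ge_0).
  assert (Hlam : 0 < lam).
  { unfold lam. assert (0 <= INR k ^ 2 / del ^ 2); [|lra].
    apply Rmult_le_pos; auto. left; apply Rinv_0_lt_compat; apply pow_lt; auto. }
  set (W := fun r t => exp (- (lam * t)) * (h r t - h1 r t)).
  assert (Wc : cont2_on K W).
  { apply cont2_mult.
    - apply cont2_fun_t. intros; apply exp_cont_pt.
    - apply (cont2_sub K (dom_cl T)); auto. apply cont2_minus; auto. }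
  destruct (evt2_rect K W Rad t1 t2 Kne Krect Kcl Wc) as [rs [ts [Ks0 Wmax]]].
  assert (Wpos : 0 < W rs ts).
  { apply Rlt_le_trans with (W rq tq); [|apply Wmax; apply DK; split; auto].
    unfold W. apply Rmult_lt_0_compat; [apply exp_pos|].
    destruct (GS _ _ Gq) as [_ [_ [? ?]]]; lra. }
  assert (Vpos : h1 rs ts < h rs ts).
  { destruct (Rle_or_lt (h rs ts) (h1 rs ts)) as [N|N]; auto. exfalso.
    unfold W in Wpos. assert (0 < exp (- (lam * ts))) by apply exp_pos.
    assert (exp (- (lam * ts)) * (h rs ts - h1 rs ts) <= 0); [|lra].
    replace (exp (- (lam * ts)) * (h rs ts - h1 rs ts)) with (- (exp (- (lam * ts)) * (h1 rs ts - h rs ts))) by ring.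
    assert (0 <= exp (- (lam * ts)) * (h1 rs ts - h rs ts)); [apply Rmult_le_pos; lra|lra]. }
  assert (Ds : D rs ts) by (apply KD; auto).
  destruct Ds as [Gs [Hts HhsC]].
  destruct (Hno rs ts Gs) as [N1 [N2 N3]].
  destruct (GR rs ts Gs) as [[R1 R2] [R3 R4]].
  assert (R1' : 0 < rs) by lra. assert (R2' : rs < Rad) by lra. assert (R3' : t1 < ts) by lra.
  destruct (local_path T Rad t1 t2 h h1 h2 rs ts Hc Hc1 Hc2 Hrd (GR rs ts Gs)) as [d1 [Hdd1 P1]].
  { destruct (GS _ _ Gs) as [_ [_ [? ?]]]; auto. }
  { destruct (GS _ _ Gs) as [_ [_ [? ?]]]; auto. }
  destruct (Hc rs ts (Hrd _ _ (GR _ _ Gs)) (C - h rs ts) ltac:(lra)) as [d2 [Hdd2 P2]].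
  set (d0 := Rmin (Rmin d1 d2) (Rmin (Rmin rs (Rad - rs)) (ts - t1))).
  assert (M1 := Rmin_l (Rmin d1 d2) (Rmin (Rmin rs (Rad - rs)) (ts - t1))).
  assert (M2 := Rmin_r (Rmin d1 d2) (Rmin (Rmin rs (Rad - rs)) (ts - t1))).
  assert (M3 := Rmin_l d1 d2). assert (M4 := Rmin_r d1 d2).
  assert (M5 := Rmin_l (Rmin rs (Rad - rs)) (ts - t1)).
  assert (M6 := Rmin_r (Rmin rs (Rad - rs)) (ts - t1)).
  assert (M7 := Rmin_l rs (Rad - rs)). assert (M8 := Rmin_r rs (Rad - rs)).
  fold d0 in M1, M2.
  assert (Hd0 : 0 < d0).
  { unfold d0. repeat apply Rmin_pos; lra. }
  assert (Box : forall r t, Rabs (r - rs) < d0 -> Rabs (t - ts) < d0 -> t <= ts -> W r t <= W rs ts).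
  { intros r t A1 A2 A3. apply Wmax. apply DK.
    apply Rabs_def2 in A1. apply Rabs_def2 in A2.
    assert (Rrt : rect Rad t1 t2 r t) by (split; split; lra).
    split; [|split; [lra|]].
    - assert (Path : path_in (region Rad t1 t2 h h1 h2) rs ts r t).
      { apply P1; auto.
        * rewrite Rabs_0_pt; auto.
        * rewrite Rabs_0_pt; auto.
        * apply Rabs_def1; lra.
        * apply Rabs_def1; lra. }
      apply (Gc rs ts r t Gs (path_end _ _ _ _ _ Path) Path).
    - assert (B := P2 r t (Hrd _ _ Rrt) ltac:(apply Rabs_def1; lra) ltac:(apply Rabs_def1; lra)).
      apply Rabs_def2 in B. lra. }
  assert (Dop : forall y, Rabs (y - rs) < d0 -> dom_op T y ts).
  { intros y Hy. apply Rabs_def2 in Hy. destruct (Kdom _ _ Ks0) as [_ [_ HT]].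
    split; [lra|]. split; [lra|]. exact HT. }
  assert (Hx0 : Rabs (rs - rs) < d0) by (rewrite Rabs_0_pt; auto).
  destruct (local_max_2 (fun y => h y ts - h1 y ts) (fun y => hr y ts - h1r y ts) rs
              (hrr rs ts - h1rr rs ts) d0 Hd0) as [Z1 Z2].
  { intros y Hy. destruct (Hd y ts (Dop y Hy)) as [A _]. destruct (Hd1 y ts (Dop y Hy)) as [B _].
    apply (is_derive_minus _ _ _ _ _ A B). }
  { destruct (Hd rs ts (Dop rs Hx0)) as [_ [A _]]. destruct (Hd1 rs ts (Dop rs Hx0)) as [_ [B _]].
    apply (is_derive_minus _ _ _ _ _ A B). }
  { intros y Hy. assert (B := Box y ts Hy ltac:(rewrite Rabs_0_pt; auto) (Rle_refl _)).
    unfold W in B. apply Rmult_le_reg_l with (exp (- (lam * ts))); [apply exp_pos|]. exact B. }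
  assert (Hphi : is_derive (fun t => exp (- (lam * t)) * (h rs t - h1 rs t)) ts
     (- lam * exp (- (lam * ts)) * (h rs ts - h1 rs ts) + exp (- (lam * ts)) * (ht rs ts - h1t rs ts))).
  { destruct (Hd rs ts (Dop rs Hx0)) as [_ [_ A]]. destruct (Hd1 rs ts (Dop rs Hx0)) as [_ [_ B]].
    assert (E : is_derive (fun t => exp (- (lam * t))) ts (- lam * exp (- (lam * ts)))).
    { auto_derive; auto. ring. }
    apply (is_derive_mult _ _ _ _ _ E (is_derive_minus _ _ _ _ _ A B)). intros; apply Rmult_comm. }
  assert (Tpos := deriv_left_max _ ts _ d0 Hphi Hd0).
  assert (Tpos' : 0 <= - lam * exp (- (lam * ts)) * (h rs ts - h1 rs ts) + exp (- (lam * ts)) * (ht rs ts - h1t rs ts)).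
  { apply Tpos. intros y Hy. apply (Box rs y Hx0); [apply Rabs_def1; lra|lra]. }
  clear Tpos.
  set (E := exp (- (lam * ts))) in *.
  assert (HE : 0 < E) by (unfold E; apply exp_pos).
  set (v := h rs ts - h1 rs ts) in *.
  assert (Hv : 0 < v) by (unfold v; lra).
  assert (L1 : lam * v <= ht rs ts - h1t rs ts).
  { apply Rmult_le_reg_l with E; auto. lra. }
  assert (Eq : ht rs ts - h1t rs ts = (hrr rs ts - h1rr rs ts) + (hr rs ts - h1r rs ts) / rs
                 + INR k ^ 2 * (sin (2 * h1 rs ts) - sin (2 * h rs ts)) / (2 * rs ^ 2)).
  { rewrite (Hpde rs ts (Dop rs Hx0)), (Hpde1 rs ts (Dop rs Hx0)). field. lra. }
  rewrite Z1 in Eq. unfold Rdiv at 1 in Eq. rewrite Rmult_0_l, Rplus_0_r in Eq.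
  assert (Hrs2 : 0 < 2 * rs ^ 2) by (assert (0 < rs ^ 2) by (apply pow_lt; lra); lra).
  destruct (Rlt_or_le rs del) as [Lt|Ge].
  - assert (S := Pdel rs ts Ks0 Lt).
    assert (X : INR k ^ 2 * (sin (2 * h1 rs ts) - sin (2 * h rs ts)) / (2 * rs ^ 2) <= 0).
    { unfold Rdiv. rewrite Rmult_assoc.
      assert (0 <= INR k ^ 2 * ((sin (2 * h rs ts) - sin (2 * h1 rs ts)) * / (2 * rs ^ 2))); [|
        replace (INR k ^ 2 * ((sin (2 * h1 rs ts) - sin (2 * h rs ts)) * / (2 * rs ^ 2))) with
          (- (INR k ^ 2 * ((sin (2 * h rs ts) - sin (2 * h1 rs ts)) * / (2 * rs ^ 2)))) by ring; lra].
      apply Rmult_le_pos; auto. apply Rmult_le_pos; [lra|]. left; apply Rinv_0_lt_compat; auto. }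
    assert (0 < lam * v) by (apply Rmult_lt_0_compat; auto). lra.
  - assert (S := sin_lip (2 * h1 rs ts) (2 * h rs ts)).
    rewrite Rabs_left in S by (unfold v in Hv; lra).
    assert (S' : sin (2 * h1 rs ts) - sin (2 * h rs ts) <= 2 * v) by (unfold v; lra).
    assert (X1 : INR k ^ 2 * (sin (2 * h1 rs ts) - sin (2 * h rs ts)) / (2 * rs ^ 2)
                 <= INR k ^ 2 * (2 * v) / (2 * rs ^ 2)).
    { unfold Rdiv. apply Rmult_le_compat_r; [left; apply Rinv_0_lt_compat; auto|].
      apply Rmult_le_compat_l; auto. }
    assert (X2 : INR k ^ 2 * (2 * v) / (2 * rs ^ 2) = INR k ^ 2 * v * / rs ^ 2) by (field; lra).
    assert (X3 : / rs ^ 2 <= / del ^ 2).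
    { apply Rinv_le_contravar; [apply pow_lt; auto|]. apply pow_incr; lra. }
    assert (X4 : INR k ^ 2 * v * / rs ^ 2 <= INR k ^ 2 * v * / del ^ 2).
    { apply Rmult_le_compat_l; auto. apply Rmult_le_pos; lra. }
    assert (X5 : lam * v = INR k ^ 2 * v * / del ^ 2 + v) by (unfold lam; field; lra).
    lra.
Qed.

Lemma classical_solution_opp k T h :
  classical_solution k T h -> classical_solution k T (fun r t => - h r t).
Proof.
  intros [Hc [hr [hrr [ht [Hd [Hco [Chr [Chrr [Cht Hpde]]]]]]]]].
  split; [apply cont2_opp; auto|].
  exists (fun r t => - hr r t), (fun r t => - hrr r t), (fun r t => - ht r t).
  split.
  { intros r t Hrt. destruct (Hd r t Hrt) as [A [B C]].
    split; [|split].
    - apply (is_derive_opp _ _ _ A).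
    - apply (is_derive_opp _ _ _ B).
    - apply (is_derive_opp _ _ _ C). }
  split; [apply cont2_opp; auto|].
  split; [apply cont2_opp; auto|].
  split; [apply cont2_opp; auto|].
  split; [apply cont2_opp; auto|].
  intros r t Hrt. rewrite (Hpde r t Hrt).
  replace (2 * - h r t) with (- (2 * h r t)) by ring. rewrite sin_neg.
  assert (r <> 0) by (destruct Hrt as [[? ?] _]; lra).
  field. auto.
Qed.

Lemma axis_opp T h h2 :
  axis_condition T h h2 -> axis_condition T (fun r t => - h r t) (fun r t => - h2 r t).
Proof.
  intros [A | [m A]].
  - left. intros t Ht HT E. apply (A t Ht HT). lra.
  - right. exists (- m)%Z. intros t Ht HT. destruct (A t Ht HT) as [E1 E2].
    rewrite opp_IZR. split; lra.
Qed.

Lemma region_opp Rad t1 t2 h h1 h2 :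
  region Rad t1 t2 (fun r t => - h r t) (fun r t => - h2 r t) (fun r t => - h1 r t) =
  region Rad t1 t2 h h1 h2.
Proof.
  apply functional_extensionality; intro r. apply functional_extensionality; intro t.
  apply propositional_extensionality. unfold region. split.
  - intros [A [B [C D]]]. repeat split; try lra; tauto.
  - intros [A [B [C D]]]. repeat split; try lra; tauto.
Qed.

Lemma part1 (k : nat) (T : Rbar) (t1 t2 Rad : R)
  (Ht : 0 <= t1 < t2) (HtT : Rbar_lt (Finite t2) T) (HR : 0 < Rad <= 1) :
  (forall h h1 h2 : R -> R -> R,
     classical_solution k T h -> classical_solution k T h1 -> classical_solution k T h2 ->
     axis_condition T h h1 -> axis_condition T h h2 ->
     forall G : R -> R -> Prop,
       path_component (region Rad t1 t2 h h1 h2) G ->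
       forall C : R,
         (forall r t, closure2 G r t -> h1 r t < C) ->
         (forall r t, closure2 G r t -> C < h2 r t) ->
         exists r t, G r t /\ (r = 0 \/ r = Rad \/ t = t1)).
Proof.
  intros h h1 h2 Hh Hh1 Hh2 Ax1 Ax2 G HG C HC1 HC2.
  apply NNPP; intro Hneg.
  assert (Hno : forall r t, G r t -> r <> 0 /\ r <> Rad /\ t <> t1).
  { intros r t Grt. split; [|split]; intro E; apply Hneg; exists r, t; auto. }
  assert (Hc := proj1 Hh). assert (Hc1 := proj1 Hh1). assert (Hc2 := proj1 Hh2).
  assert (Hrd : forall r t, rect Rad t1 t2 r t -> dom_cl T r t).
  { intros r t H. apply (rect_dom T Rad t1 t2); auto; lra. }
  assert (HG' := HG). destruct HG' as [Gne [GS [Gp Gc]]].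
  assert (GR : forall r t, G r t -> rect Rad t1 t2 r t) by (intros; apply (region_rect Rad t1 t2 h h1 h2); auto).
  assert (clR : forall r t, closure2 G r t -> rect Rad t1 t2 r t) by (intros; apply (cl_rect Rad t1 t2 G); auto).
  assert (Hqs : exists s rq tq, (forall r t, closure2 G r t -> t <= s -> h r t <> C) /\ G rq tq /\ tq <= s).
  { set (E := fun r t => closure2 G r t /\ h r t = C).
    destruct (classic (exists r t, E r t)) as [Ene|Ene].
    - assert (Erect : forall r t, E r t -> rect Rad t1 t2 r t) by (intros r t [H _]; auto).
      assert (Ecl : forall r t, closure2 E r t -> E r t).
      { intros r t H. assert (Rrt : rect Rad t1 t2 r t) by (apply (cl_rect Rad t1 t2 E); auto).
        split.
        - apply cl_cl. apply (cl_mono E); auto. intros ? ? [? ?]; auto.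
        - apply Rle_antisym.
          + apply (cl_le (dom_cl T) E h (fun _ _ => C) r t Hc (cont2_const _ _)
              ltac:(intros ? ? Hx; apply Hrd, Erect; auto) (Hrd _ _ Rrt)
              ltac:(intros ? ? [? Hx]; rewrite Hx; lra) H).
          + apply (cl_le (dom_cl T) E (fun _ _ => C) h r t (cont2_const _ _) Hc
              ltac:(intros ? ? Hx; apply Hrd, Erect; auto) (Hrd _ _ Rrt)
              ltac:(intros ? ? [? Hx]; rewrite Hx; lra) H). }
      destruct (min_t_rect E Rad t1 t2 Ene Erect Ecl) as [rc [tau [Ec Pmin]]].
      destruct Ec as [Gcl hC].
      assert (Rc : rect Rad t1 t2 rc tau) by auto.
      assert (Lo : h1 rc tau < h rc tau) by (rewrite hC; auto).
      assert (Hi : h rc tau < h2 rc tau) by (rewrite hC; auto).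
      assert (Gcz : G rc tau).
      { apply (cl_region_G T Rad t1 t2 h h1 h2 G rc tau Hc Hc1 Hc2 Hrd HG Gcl).
        destruct Rc as [Ra Rb]. split; auto. }
      destruct (Hno _ _ Gcz) as [N1 [N2 N3]].
      destruct Rc as [[R1 R2] [R3 R4]].
      destruct (local_path T Rad t1 t2 h h1 h2 rc tau Hc Hc1 Hc2 Hrd ltac:(split; split; auto) Lo Hi)
        as [d1 [Hd1 P1]].
      set (eps := Rmin d1 (tau - t1) / 2).
      assert (M1 := Rmin_l d1 (tau - t1)). assert (M2 := Rmin_r d1 (tau - t1)).
      assert (Mp : 0 < Rmin d1 (tau - t1)) by (apply Rmin_pos; lra).
      exists (tau - eps), rc, (tau - eps). split; [|split; [|lra]].
      + intros r t Hcl Hle Heq. assert (Pm := Pmin r t (conj Hcl Heq)). unfold eps in *. lra.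
      + assert (Path : path_in (region Rad t1 t2 h h1 h2) rc tau rc (tau - eps)).
        { apply P1.
          - split; split; auto.
          - split; split; unfold eps in *; lra.
          - rewrite Rabs_0_pt; auto.
          - rewrite Rabs_0_pt; auto.
          - rewrite Rabs_0_pt; auto.
          - replace (tau - eps - tau) with (- eps) by ring. rewrite Rabs_Ropp, Rabs_pos_eq; unfold eps in *; lra. }
        apply (Gc rc tau rc (tau - eps) Gcz (path_end _ _ _ _ _ Path) Path).
    - destruct Gne as [rq [tq Gq]].
      exists t2, rq, tq. split; [|split; auto].
      + intros r t Hcl _ Heq. apply Ene. exists r, t. split; auto.
      + destruct (GR _ _ Gq) as [_ [_ ?]]; auto. }
  destruct Hqs as [s [rq [tq [Hs [Gq Htq]]]]].
  assert (Hhq : h rq tq <> C) by (apply Hs; auto; apply cl_in; auto).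
  destruct (Rlt_or_le (h rq tq) C) as [Lt|Ge].
  - apply (core_low k T t1 t2 Rad Ht HtT HR h h1 h2 Hh Hh1 Hc2 Ax1 G HG C HC1 HC2 Hno s Hs rq tq Gq Htq Lt).
  - apply (core_low k T t1 t2 Rad Ht HtT HR (fun r t => - h r t) (fun r t => - h2 r t) (fun r t => - h1 r t)
      (classical_solution_opp k T h Hh) (classical_solution_opp k T h2 Hh2) (cont2_opp _ _ Hc1)
      (axis_opp T h h2 Ax2) G ltac:(rewrite region_opp; exact HG) (- C)
      ltac:(intros r t H; specialize (HC2 r t H); lra)
      ltac:(intros r t H; specialize (HC1 r t H); lra) Hno s
      ltac:(intros r t H1 H2 H3; apply (Hs r t H1 H2); lra) rq tq Gq Htq).
    lra.
Qed.

Lemma is_derive_cR (c x : R) : is_derive (fun _ : R => c) x 0.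
Proof. exact (is_derive_const c x). Qed.

Lemma const_solution k T c : sin (2 * c) = 0 -> classical_solution k T (fun _ _ => c).
Proof.
  intros Hs. split; [apply cont2_const|].
  exists (fun _ _ => 0), (fun _ _ => 0), (fun _ _ => 0).
  split.
  { intros r t _. split; [|split]; apply is_derive_cR. }
  split; [apply cont2_const|]. split; [apply cont2_const|].
  split; [apply cont2_const|]. split; [apply cont2_const|].
  intros r t Hrt. rewrite Hs. assert (r <> 0) by (destruct Hrt as [[? ?] _]; lra).
  field; auto.
Qed.

Lemma sin_chi u : sin (2 * (PI - 2 * atan u)) = - (4 * u * (1 - u * u) / ((1 + u * u) * (1 + u * u))).
Proof.
  replace (2 * (PI - 2 * atan u)) with (2 * PI - 2 * (2 * atan u)) by ring.
  rewrite sin_minus, sin_2PI, cos_2PI.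
  rewrite (sin_2a (2 * atan u)), (cos_2a (atan u)), (sin_2a (atan u)), sin_atan, cos_atan.
  assert (Hp : 0 < 1 + u²) by (assert (0 <= u²) by apply Rle_0_sqr; lra).
  assert (Hq : sqrt (1 + u²) * sqrt (1 + u²) = 1 + u * u) by (rewrite sqrt_sqrt; [unfold Rsqr; ring| lra]).
  assert (Hq0 : 0 < sqrt (1 + u²)) by (apply sqrt_lt_R0; lra).
  rewrite <- Hq. field. lra.
Qed.

Lemma chi_solution k T alpha : classical_solution k T (chi k alpha).
Proof.
  destruct k as [|n].
  - change (classical_solution 0 T (fun _ _ => PI - 2 * atan (1 * 1))).
    apply const_solution. rewrite Rmult_1_l, atan_1.
    replace (2 * (PI - 2 * (PI / 4))) with PI by field. apply sin_PI.
  - set (a := alpha ^ S n). set (K := INR (S n)).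
    set (u := fun r => a * r ^ S n).
    set (hr := fun r => -2 * K * u r / (r * (1 + u r * u r))).
    set (hrr := fun r => -2 * K * u r * ((K - 1) - (K + 1) * (u r * u r)) / (r * r * ((1 + u r * u r) * (1 + u r * u r)))).
    assert (Hpos : forall r, 0 < 1 + u r * u r) by (intros r; assert (0 <= u r * u r) by nra; lra).
    assert (D1 : forall r, r <> 0 -> is_derive (fun s => PI - 2 * atan (a * s ^ S n)) r (hr r)).
    { intros r Hr. auto_derive; [auto|].
      change (match n with 0%nat => 1 | S _ => INR n + 1 end) with (INR (S n)).
      unfold hr, u, K. rewrite <- !tech_pow_Rmult.
      assert (P := Hpos r). unfold u in P. rewrite <- tech_pow_Rmult in P. field. split; auto. lra. }
    assert (D2 : forall r, r <> 0 -> is_derive hr r (hrr r)).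
    { intros r Hr. unfold hr, hrr, u. auto_derive.
      - assert (P := Hpos r). unfold u in P. rewrite <- tech_pow_Rmult in P.
        apply Rmult_integral_contrapositive; split; auto. lra.
      - change (match n with 0%nat => 1 | S _ => INR n + 1 end) with (INR (S n)).
        fold K. rewrite <- !tech_pow_Rmult.
        assert (P := Hpos r). unfold u in P. rewrite <- tech_pow_Rmult in P. field. split; auto. lra. }
    assert (Cchi : forall D, cont2_on D (chi (S n) alpha)).
    { intros D. change (cont2_on D (fun r _ => (fun r => PI - 2 * atan (a * r ^ S n)) r)).
      apply cont2_fun_r. intros r t _.
      assert (E : ex_derive (fun r => PI - 2 * atan (a * r ^ S n)) r) by (auto_derive; auto).
      destruct E as [l Hl]. exact (deriv_cont_pt _ _ _ Hl). }
    assert (Rpos : forall r t, dom_op T r t -> r <> 0) by (intros r t [[? ?] _]; lra).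
    split; [apply Cchi|].
    exists (fun r _ => hr r), (fun r _ => hrr r), (fun _ _ => 0).
    split.
    { intros r t Hrt. split; [|split].
      - change (is_derive (fun s => PI - 2 * atan (a * s ^ S n)) r (hr r)). exact (D1 r (Rpos r t Hrt)).
      - apply (D2 r (Rpos r t Hrt)).
      - change (is_derive (fun _ => PI - 2 * atan (a * r ^ S n)) t 0). apply is_derive_cR. }
    split; [apply Cchi|].
    split.
    { apply cont2_fun_r. intros r t Hrt. exact (deriv_cont_pt _ _ _ (D2 r (Rpos r t Hrt))). }
    split.
    { apply cont2_fun_r. intros r t Hrt.
      assert (Hr := Rpos r t Hrt).
      assert (E : ex_derive hrr r).
      { unfold hrr, u. auto_derive. assert (P := Hpos r). unfold u in P.
        rewrite <- tech_pow_Rmult in P. try rewrite <- !tech_pow_Rmult.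
        apply Rmult_integral_contrapositive; split.
        - apply Rmult_integral_contrapositive; split; auto.
        - apply Rmult_integral_contrapositive; split; lra. }
      destruct E as [l Hl]. exact (deriv_cont_pt _ _ _ Hl). }
    split; [apply cont2_const|].
    intros r t Hrt. assert (Hr := Rpos r t Hrt).
    change (0 = hrr r + hr r / r - INR (S n) ^ 2 * sin (2 * (PI - 2 * atan (a * r ^ S n))) / (2 * r ^ 2)).
    rewrite sin_chi. fold K.
    assert (P := Hpos r). unfold hrr, hr. unfold u in *. rewrite <- !tech_pow_Rmult in *.
    field. split; auto. lra.
Qed.

Lemma atan_le x y : x <= y -> atan x <= atan y.
Proof. intros [H|H]; [left; apply atan_increasing; auto|subst; lra]. Qed.

Lemma chi_ge k alpha r t : 0 <= alpha -> 0 <= r -> alpha * r <= 1 -> PI / 2 <= chi k alpha r t.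
Proof.
  intros Ha Hr H. unfold chi. rewrite <- Rpow_mult_distr.
  assert (E : (alpha * r) ^ k <= 1).
  { rewrite <- (pow1 k). apply pow_incr. split; auto. apply Rmult_le_pos; auto. }
  assert (A := atan_le _ _ E). rewrite atan_1 in A. lra.
Qed.

Lemma chi_le k alpha r0 r t : 0 <= alpha -> 0 <= r0 <= r ->
  chi k alpha r t <= PI - 2 * atan (alpha ^ k * r0 ^ k).
Proof.
  intros Ha Hr. unfold chi.
  assert (E : alpha ^ k * r0 ^ k <= alpha ^ k * r ^ k).
  { apply Rmult_le_compat_l; [apply pow_le; auto|]. apply pow_incr; auto. }
  assert (A := atan_le _ _ E). lra.
Qed.

Lemma part2 (k : nat) (T : Rbar) (t1 t2 Rad : R)
  (Ht : 0 <= t1 < t2) (HtT : Rbar_lt (Finite t2) T) (HR : 0 < Rad <= 1) :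
  (forall h : R -> R -> R,
     classical_solution k T h ->
     (forall t, 0 <= t -> Rbar_lt (Finite t) T -> h 0 t = 0) ->
     forall h1 : R -> R -> R,
       (h1 = (fun _ _ => PI / 2) \/ exists alpha, 0 < alpha /\ h1 = chi k alpha) ->
       classical_solution k T h1 /\ classical_solution k T (fun _ _ => PI) /\
       axis_condition T h h1 /\ axis_condition T h (fun _ _ => PI) /\
       forall G : R -> R -> Prop,
         path_component (region Rad t1 t2 h h1 (fun _ _ => PI)) G ->
         exists C : R,
           (forall r t, closure2 G r t -> h1 r t < C) /\
           (forall r t, closure2 G r t -> C < PI)).
Proof.
  intros h Hh H0 h1 Hh1.
  assert (PIpos := PI_RGT_0).
  assert (SolPI : classical_solution k T (fun _ _ => PI)) by (apply const_solution; apply sin_2PI).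
  assert (AxPI : axis_condition T h (fun _ _ => PI)).
  { left. intros t Ht0 HT. rewrite (H0 t Ht0 HT). lra. }
  destruct Hh1 as [E | [alpha [Ha E]]]; subst h1.
  - split; [apply const_solution; replace (2 * (PI / 2)) with PI by field; apply sin_PI|].
    split; auto. split; [|split; auto].
    + left. intros t Ht0 HT. rewrite (H0 t Ht0 HT). lra.
    + intros G _. exists (3 * PI / 4). split; intros; lra.
  - split; [apply chi_solution|]. split; auto. split; [|split; auto].
    + left. intros t Ht0 HT. rewrite (H0 t Ht0 HT).
      assert (C := chi_ge k alpha 0 t ltac:(lra) ltac:(lra) ltac:(lra)). lra.
    + intros G HG.
      assert (Hc := proj1 Hh).
      assert (Hrd : forall r t, rect Rad t1 t2 r t -> dom_cl T r t).
      { intros r t H. apply (rect_dom T Rad t1 t2); auto; lra. }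
      destruct HG as [Gne [GS _]].
      assert (GR : forall r t, G r t -> rect Rad t1 t2 r t) by (intros; apply (region_rect Rad t1 t2 h (chi k alpha) (fun _ _ => PI)); auto).
      assert (clR : forall r t, closure2 G r t -> rect Rad t1 t2 r t) by (intros; apply (cl_rect Rad t1 t2 G); auto).
      destruct (min_r_rect (closure2 G) Rad t1 t2) as [r0 [t0 [K0 Pmin]]].
      { destruct Gne as [r [t Grt]]. exists r, t. apply cl_in; auto. }
      { auto. }
      { intros; apply cl_cl; auto. }
      assert (Hr0 : 0 < r0).
      { destruct (Rle_or_lt r0 0) as [N|N]; auto. exfalso.
        assert (Rr := clR _ _ K0). assert (E0 : r0 = 0) by (destruct Rr as [[? ?] _]; lra). subst r0.
        assert (Dz := Hrd _ _ Rr). destruct Dz as [_ [Ht0 HT]].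
        destruct (Hc 0 t0 (Hrd _ _ Rr) (PI / 2) ltac:(lra)) as [d [Hd P]].
        destruct (K0 (Rmin d (/ alpha))) as [r' [t' [G' [A1 A2]]]].
        { apply Rmin_pos; auto. apply Rinv_0_lt_compat; auto. }
        assert (M1 := Rmin_l d (/ alpha)). assert (M2 := Rmin_r d (/ alpha)).
        assert (B := P r' t' (Hrd _ _ (GR _ _ G')) ltac:(lra) ltac:(lra)).
        rewrite (H0 t0 Ht0 HT) in B. apply Rabs_def2 in B.
        destruct (GS _ _ G') as [[R1 R2] [_ [L1 _]]].
        assert (A1' : r' < / alpha) by (rewrite Rminus_0_r in A1; apply Rabs_def2 in A1; lra).
        assert (Hal : alpha * r' <= 1).
        { left. apply Rmult_lt_reg_l with (/ alpha); [apply Rinv_0_lt_compat; auto|].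
          rewrite <- Rmult_assoc, Rinv_l, Rmult_1_l, Rmult_1_r by lra. auto. }
        assert (Cg := chi_ge k alpha r' t' ltac:(lra) R1 Hal). lra. }
      set (u0 := alpha ^ k * r0 ^ k).
      assert (Hu0 : 0 < u0) by (unfold u0; apply Rmult_lt_0_compat; apply pow_lt; auto).
      assert (At : 0 < atan u0) by (rewrite <- atan_0; apply atan_increasing; auto).
      exists (PI - atan u0). split.
      * intros r t Hcl. assert (Pm := Pmin r t Hcl).
        assert (Cl := chi_le k alpha r0 r t ltac:(lra) ltac:(lra)). fold u0 in Cl. lra.
      * intros; lra.
Qed.

Theorem mainTheorem17 (k : nat) (T : Rbar) (t1 t2 Rad : R)
  (Ht : 0 <= t1 < t2) (HtT : Rbar_lt (Finite t2) T) (HR : 0 < Rad <= 1) :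
  (forall h h1 h2 : R -> R -> R,
     classical_solution k T h -> classical_solution k T h1 -> classical_solution k T h2 ->
     axis_condition T h h1 -> axis_condition T h h2 ->
     forall G : R -> R -> Prop,
       path_component (region Rad t1 t2 h h1 h2) G ->
       forall C : R,
         (forall r t, closure2 G r t -> h1 r t < C) ->
         (forall r t, closure2 G r t -> C < h2 r t) ->
         exists r t, G r t /\ (r = 0 \/ r = Rad \/ t = t1))
  /\
  (forall h : R -> R -> R,
     classical_solution k T h ->
     (forall t, 0 <= t -> Rbar_lt (Finite t) T -> h 0 t = 0) ->
     forall h1 : R -> R -> R,
       (h1 = (fun _ _ => PI / 2) \/ exists alpha, 0 < alpha /\ h1 = chi k alpha) ->
       classical_solution k T h1 /\ classical_solution k T (fun _ _ => PI) /\
       axis_condition T h h1 /\ axis_condition T h (fun _ _ => PI) /\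
       forall G : R -> R -> Prop,
         path_component (region Rad t1 t2 h h1 (fun _ _ => PI)) G ->
         exists C : R,
           (forall r t, closure2 G r t -> h1 r t < C) /\
           (forall r t, closure2 G r t -> C < PI)).
Proof.
  split; [apply part1 | apply part2]; auto.
Qed.
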